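(* Let $F^\sharp$ be a skew-symmetric endomorphism of a real vector space $V$ endowed with a non-degenerate inner product $g^\flat=\langle\,,\,\rangle$ of signature $\{p,q\}$ with $p$ or $q$ non-zero. Assume $F^\sharp\circ F^\sharp=\mu\,k\otimes\boldsymbol k$ with $k\in V$ non-zero and null and $\mu\neq0$. Suppose moreover that either (i) $V$ has Lorentzian signature, or (ii) $F^\sharp(\langle k\rangle^\perp)\subset\operatorname{span}(k)$. Then there exists $w\in V$, linearly independent of and orthogonal to $k$, such that $$F^\sharp=k\otimes\boldsymbol w-w\otimes\boldsymbol k,\qquad \mu=-\langle w,w\rangle.$$ Conversely, any $F^\sharp$ of this form with $k$ null and $w$ orthogonal to $k$ satisfies $F^\sharp\circ F^\sharp=-\langle w,w\rangle\,k\otimes\boldsymbol k$.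
   Context: Skew-symmetric: $\langle F^\sharp x,y\rangle=-\langle x,F^\sharp y\rangle$. $u\otimes\boldsymbol v$ denotes the linear map $x\mapsto u\langle v,x\rangle$. $\langle k\rangle^\perp=\{x\in V:\langle k,x\rangle=0\}$. *)

(* Defs.v *)
From HB Require Import structures.
From mathcomp Require Import all_boot all_order all_algebra.
From mathcomp Require Import reals.
Set Implicit Arguments. Unset Strict Implicit. Unset Printing Implicit Defensive.
Import Order.TTheory GRing.Theory Num.Theory.
Local Open Scope ring_scope.

(* V = column vectors 'cV[R]_n; the inner product is given by a Gram matrix G
   (symmetric, invertible = non-degenerate): <x,y> = x^T G y. *)
Definition ip (R : realType) (n : nat) (G : 'M[R]_n) (x y : 'cV[R]_n) : R :=
  (x^T *m G *m y) 0 0.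

Definition nondeg_inner (R : realType) (n : nat) (G : 'M[R]_n) : Prop :=
  G^T = G /\ G \in unitmx.

(* u (x) v-flat : the linear map x |-> u <v, x>, as a matrix *)
Definition tens (R : realType) (n : nat) (G : 'M[R]_n) (u v : 'cV[R]_n) : 'M[R]_n :=
  u *m (v^T *m G).

Definition skew_adj (R : realType) (n : nat) (G : 'M[R]_n) (F : 'M[R]_n) : Prop :=
  forall x y, ip G (F *m x) y = - ip G x (F *m y).

(* Lorentzian signature: {1, n-1} or {n-1, 1}, i.e. G is congruent to
   diag(-s, s, ..., s) with s = +1 or -1. *)
Definition lorentzian (R : realType) (n : nat) (G : 'M[R]_n) : Prop :=
  exists (P : 'M[R]_n) (s : R), P \in unitmx /\ (s = 1 \/ s = -1) /\
    P^T *m G *m P = diag_mx (\row_(i < n) (if val i == 0%N then - s else s)).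

(* Main.v *)
Require Import Defs.
From HB Require Import structures.
From mathcomp Require Import all_boot all_order all_algebra.
From mathcomp Require Import reals.
From mathcomp Require Import ring lra.
Import Order.TTheory GRing.Theory Num.Theory.
Local Open Scope ring_scope.

Section Aux.
Variables (R : realType) (n : nat).
Implicit Types (G F M : 'M[R]_n) (x y z u v k w : 'cV[R]_n).

Lemma ipDl M x y z : ip M (x + y) z = ip M x z + ip M y z.
Proof. by rewrite /ip raddfD /= !mulmxDl mxE. Qed.
Lemma ipDr M x y z : ip M z (x + y) = ip M z x + ip M z y.
Proof. by rewrite /ip !mulmxDr mxE. Qed.
Lemma ipZl M a x y : ip M (a *: x) y = a * ip M x y.
Proof. by rewrite /ip linearZ /= -!scalemxAl mxE. Qed.
Lemma ipZr M a x y : ip M x (a *: y) = a * ip M x y.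
Proof. by rewrite /ip -!scalemxAr mxE. Qed.
Lemma ipNl M x y : ip M (- x) y = - ip M x y.
Proof. by rewrite -scaleN1r ipZl mulN1r. Qed.
Lemma ipNr M x y : ip M x (- y) = - ip M x y.
Proof. by rewrite -scaleN1r ipZr mulN1r. Qed.
Lemma ipBl M x y z : ip M (x - y) z = ip M x z - ip M y z.
Proof. by rewrite ipDl ipNl. Qed.
Lemma ipBr M x y z : ip M z (x - y) = ip M z x - ip M z y.
Proof. by rewrite ipDr ipNr. Qed.
Lemma ip0l M y : ip M 0 y = 0.
Proof. by rewrite -(scale0r 0) ipZl mul0r. Qed.
Lemma ip0r M y : ip M y 0 = 0.
Proof. by rewrite -(scale0r 0) ipZr mul0r. Qed.

Lemma ip_sym G x y : G^T = G -> ip G x y = ip G y x.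
Proof.
move=> sG; rewrite /ip.
have E : forall A : 'M[R]_1, A 0 0 = A^T 0 0 by move=> A; rewrite mxE.
rewrite E.
by rewrite !trmx_mul trmxK sG mulmxA.
Qed.

Lemma tensE G u v x : tens G u v *m x = ip G v x *: u.
Proof.
by rewrite /tens -mulmxA [(v^T *m G) *m x]mx11_scalar mul_mx_scalar.
Qed.

Lemma mx_ext F F' : (forall x, F *m x = F' *m x) -> F = F'.
Proof.
move=> H; apply/matrixP => i j.
by have /colP/(_ i) := H (delta_mx j 0); rewrite -!colE !mxE.
Qed.

End Aux.

Lemma conv_part (R : realType) n (G : 'M[R]_n) (k w : 'cV[R]_n) :
  G^T = G -> ip G k k = 0 -> ip G k w = 0 ->
  let F := tens G k w - tens G w k in
  F *m F = - ip G w w *: tens G k k.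
Proof.
move=> sG kk kw F; apply: mx_ext => x.
have FE : forall y, F *m y = ip G w y *: k - ip G k y *: w.
  by move=> y; rewrite /F mulmxBl !tensE.
rewrite -mulmxA FE -scalemxAl tensE FE; rewrite ipBr !ipZr ipBr !ipZr (@ip_sym _ _ G w k sG) kw kk.
by rewrite !mulr0 sub0r subrr scale0r subr0 scalerA mulrC mulNr.
Qed.

Lemma exists_dual (R : realType) n (G : 'M[R]_n) (k : 'cV[R]_n) :
  G \in unitmx -> G^T = G -> k != 0 -> exists u, ip G k u = 1.
Proof.
move=> uG sG k0; set y := G *m k.
have y0 : y != 0.
  apply: contra k0 => /eqP y0; apply/eqP.
  by rewrite -(mulKmx uG k) -/y y0 mulmx0.
case: (pickP (fun i => y i 0 != 0)) => [i yi | H]; last first.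
  by case/eqP: y0; apply/colP => i; move: (H i) => /negbFE/eqP ->; rewrite mxE.
exists ((y i 0)^-1 *: delta_mx i 0).
rewrite ipZr /ip -[G in k^T *m G]sG -trmx_mul -/y -colE !mxE.
by move: yi; rewrite /y mxE => yi; rewrite mulVf.
Qed.

Lemma case_ii (R : realType) n (G : 'M[R]_n) (F : 'M[R]_n) (k : 'cV[R]_n) (mu : R) :
  G^T = G -> G \in unitmx -> skew_adj G F -> k != 0 -> ip G k k = 0 -> mu != 0 ->
  F *m F = mu *: tens G k k ->
  (forall x, ip G k x = 0 -> exists c : R, F *m x = c *: k) ->
  exists w : 'cV[R]_n,
       (forall a b : R, a *: k + b *: w = 0 -> a = 0 /\ b = 0) /\
       ip G k w = 0 /\
       F = tens G k w - tens G w k /\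
       mu = - ip G w w.
Proof.
move=> sG uG sk k0 kk mu0 HF Hii.
have [c Fk] := Hii k kk.
have Fk0 : F *m k = 0.
  have : (F *m F) *m k = (c*c) *: k by rewrite -mulmxA Fk -scalemxAr Fk scalerA.
  rewrite HF -scalemxAl tensE kk scale0r scaler0 => /esym /eqP.
  rewrite scaler_eq0 (negPf k0) orbF mulf_eq0 orbb => /eqP c0.
  by rewrite Fk c0 scale0r.
have [u ku] := @exists_dual _ _ G k uG sG k0.
set w := - (F *m u).
have kw : ip G k w = 0.
  rewrite /w ipNr; have := sk k u; rewrite Fk0 ip0l => h.
  by rewrite (_ : ip G k (F *m u) = 0) ?oppr0 //; lra.
have wu : ip G w u = 0.
  rewrite /w ipNl; have := sk u u; rewrite (@ip_sym _ _ G u (F *m u) sG) => h.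
  lra.
have Fu : F *m u = - w by rewrite /w opprK.
have FE : forall x, F *m x = ip G w x *: k - ip G k x *: w.
  move=> x; set x' := x - ip G k x *: u.
  have kx' : ip G k x' = 0 by rewrite ipBr ipZr ku mulr1 subrr.
  have [d Fx'] := Hii x' kx'.
  have dE : d = ip G w x'.
    have := sk u x'; rewrite Fx' ipZr (@ip_sym _ _ G u k sG) ku mulr1 /w ipNl => ->.
    by rewrite opprK.
  have -> : x = x' + ip G k x *: u by rewrite /x' subrK.
  clearbody x'; rewrite mulmxDr Fx' -scalemxAr Fu !ipDr !ipZr wu kx' ku mulr0 addr0 add0r mulr1.
  by rewrite dE scalerN.
have HFw : F = tens G k w - tens G w k.
  by apply: mx_ext => x; rewrite FE mulmxBl !tensE.
have muE : mu = - ip G w w.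
  have := @conv_part _ _ G k w sG kk kw; rewrite /= -HFw HF => /(congr1 (fun M => M *m u)).
  rewrite -!scalemxAl tensE ku scale1r => /eqP.
  by rewrite -subr_eq0 -scalerBl scaler_eq0 (negPf k0) orbF subr_eq0 => /eqP.
exists w; split; last by [].
move=> a b H; case: (eqVneq b 0) => [b0|bn0].
  move: H; rewrite b0 scale0r addr0 => /eqP; rewrite scaler_eq0 (negPf k0) orbF.
  by move/eqP.
exfalso; move/eqP: mu0; apply.
have wE : w = (- (a / b)) *: k.
  move/eqP: H; rewrite addrC addr_eq0 => /eqP H.
  by rewrite -[w]scale1r -(mulVf bn0) -scalerA H scalerN scalerA scaleNr mulrC.
by rewrite muE wE ipZl ipZr kk !mulr0 oppr0.
Qed.

Lemma lor_span (R : realType) n (G : 'M[R]_n) (k v : 'cV[R]_n) :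
  G^T = G -> lorentzian G -> k != 0 -> ip G k k = 0 -> ip G v v = 0 ->
  ip G v k = 0 -> exists c : R, v = c *: k.
Proof.
move=> sG [P [s [uP [s1 HP]]]] k0 kk vv vk.
set d := \row_(i < n) (if val i == 0%N then - s else s).
set D := diag_mx d.
have ipP : forall x y, ip G (P *m x) (P *m y) = ip D x y.
  by move=> x y; rewrite /D -HP /ip trmx_mul !mulmxA.
have key : forall z : 'cV[R]_n, (forall i : 'I_n, val i == 0%N -> z i 0 = 0) ->
    ip D z z = 0 -> z = 0.
  move=> z z0 hz.
  have : ip D z z = s * \sum_i z i 0 ^+ 2.
    rewrite /ip /D mul_mx_diag mxE big_distrr; apply: eq_bigr => i _; rewrite !mxE.
    rewrite -[RHS]/(s * (z i 0 ^+ 2)); case: ifP => h; last by ring.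
    by rewrite (z0 i h); ring.
  rewrite hz => /esym /eqP; rewrite mulf_eq0 => /orP[s0|].
    by case: s1 => s1; rewrite s1 ?oppr_eq0 oner_eq0 in s0.
  rewrite psumr_eq0 => [/allP h|i _]; last exact: sqr_ge0.
  apply/colP => i; rewrite mxE; have := h i (mem_index_enum i).
  by rewrite /= sqrf_eq0 => /eqP.
set k' := invmx P *m k; set v' := invmx P *m v.
have kE : k = P *m k' by rewrite /k' mulKVmx.
have vE : v = P *m v' by rewrite /v' mulKVmx.
clearbody k' v'.
have [i0 [hi0 ki0]] : exists i0 : 'I_n, val i0 == 0%N /\ k' i0 0 != 0.
  case: (pickP (fun i : 'I_n => (val i == 0%N) && (k' i 0 != 0))) => [i /andP[]|H].
    by move=> ? ?; exists i.
  exfalso; move/eqP: k0; apply.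
  have : k' = 0.
    apply: key; last by rewrite -ipP -kE.
    by move=> i hi; move: (H i); rewrite hi /= => /negbFE/eqP.
  by rewrite kE => ->; rewrite mulmx0.
set c := v' i0 0 / k' i0 0.
exists c.
have : v' - c *: k' = 0.
  apply: key.
    move=> i hi; have -> : i = i0 by apply/val_inj; rewrite (eqP hi) (eqP hi0).
    by rewrite !mxE /c divfK // subrr.
  have kv : ip G k v = 0 by rewrite (@ip_sym _ _ G k v sG).
  rewrite ipBl !ipBr !ipZl !ipZr -!ipP -kE -vE vv vk kv kk.
  by rewrite !mulr0 subrr.
move/eqP; rewrite subr_eq0 => /eqP hv.
by rewrite vE kE hv -scalemxAr.
Qed.

Theorem mainTheorem14 (R : realType) (n : nat) (G : 'M[R]_n) :
  nondeg_inner G ->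
  (forall (F : 'M[R]_n) (k : 'cV[R]_n) (mu : R),
     skew_adj G F ->
     k != 0 -> ip G k k = 0 -> mu != 0 ->
     F *m F = mu *: tens G k k ->
     (lorentzian G \/
      (forall x, ip G k x = 0 -> exists c : R, F *m x = c *: k)) ->
     exists w : 'cV[R]_n,
       (forall a b : R, a *: k + b *: w = 0 -> a = 0 /\ b = 0) /\
       ip G k w = 0 /\
       F = tens G k w - tens G w k /\
       mu = - ip G w w)
  /\
  (forall k w : 'cV[R]_n,
     ip G k k = 0 -> ip G k w = 0 ->
     let F := tens G k w - tens G w k in
     F *m F = - ip G w w *: tens G k k).
Proof.
move=> [sG uG]; split; last by move=> k w kk kw; exact: conv_part.
move=> F k mu sk k0 kk mu0 HF HLii.
apply: (@case_ii _ _ G F k mu sG uG sk k0 kk mu0 HF).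
case: HLii => [HL|//].
have FF : forall x, F *m (F *m x) = (mu * ip G k x) *: k.
  by move=> x; rewrite mulmxA HF -scalemxAl tensE scalerA.
have [a Fka] : exists a : R, F *m k = a *: k.
  apply: (@lor_span _ _ G k _ sG HL k0 kk).
    by rewrite sk FF ipZr kk !mulr0 oppr0.
  have := sk k k; rewrite (@ip_sym _ _ G k (F *m k) sG) => h.
  move: h; set t := ip G (F *m k) k => h; rewrite -/t; clear -h; lra.
move=> x kx; apply: (@lor_span _ _ G k _ sG HL k0 kk).
  by rewrite sk FF ipZr kx mulr0 mul0r oppr0.
by rewrite sk Fka ipZr (@ip_sym _ _ G x k sG) kx mulr0 oppr0.
Qed.
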